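(* (a) Let $\Omega$ be a nonempty set, $k$ a positive integer and $\mathcal{A}_1,\dots,\mathcal{A}_k$ algebras of subsets of $\Omega$. Then $\{A_1\cap\dots\cap A_k: A_i\in\mathcal{A}_i\text{ for every } i\in[k]\}$ is a $k$-semiring on $\Omega$. (b) Let $d,k_1,\dots,k_d$ be positive integers and $k=\sum_{i=1}^d k_i$. Let $\Omega_1,\dots,\Omega_d$ be nonempty sets and for each $i\in[d]$ let $\mathcal{S}_i$ be a $k_i$-semiring on $\Omega_i$. Then $\{S_1\times\dots\times S_d: S_i\in\mathcal{S}_i\text{ for every } i\in[d]\}$ is a $k$-semiring on $\Omega_1\times\dots\times\Omega_d$.
   Context: $[n]=\{1,\dots,n\}$. A collection $\mathcal{S}$ of subsets of a nonempty set $\Omega$ is a $k$-semiring on $\Omega$ if: (P1) $\emptyset,\Omega\in\mathcal{S}$; (P2) $S\cap T\in\mathcal{S}$ for all $S,T\in\mathcal{S}$; (P3) for all $S,T\in\mathcal{S}$ there exist $\ell\in[k]$ and pairwise disjoint $R_1,\dots,R_\ell\in\mathcal{S}$ with $S\setminus T=R_1\cup\dots\cup R_\ell$. *)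

(* Defs.v *)
From mathcomp Require Import all_boot.
From mathcomp Require Import boolp classical_sets.
Set Implicit Arguments. Unset Strict Implicit. Unset Printing Implicit Defensive.
Local Open Scope classical_set_scope.

(* The ground set Omega is the whole type T (setT). *)

Definition algebra_of_sets (T : Type) (A : set (set T)) : Prop :=
  [/\ A setT,
      (forall X, A X -> A (~` X)) &
      (forall X Y, A X -> A Y -> A (X `|` Y))].

Definition ksemiring (T : Type) (k : nat) (S : set (set T)) : Prop :=
  [/\ S set0, S setT,
      (forall A B, S A -> S B -> S (A `&` B)) &
      (forall A B, S A -> S B ->
         exists l : nat, (1 <= l <= k)%N /\
         exists R : nat -> set T,
           (forall i, (i < l)%N -> S (R i)) /\
           (forall i j, (i < l)%N -> (j < l)%N -> i <> j -> R i `&` R j = set0) /\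
           A `\` B = \bigcup_(i in [set i | (i < l)%N]) R i)].

(* Main.v *)
Require Import Defs.
From mathcomp Require Import all_boot zify.
From mathcomp Require Import boolp classical_sets.
Local Open Scope classical_set_scope.
Lemma flatten (d : nat) (c : nat -> nat) :
 exists f : nat -> nat * nat,
  (forall n, n < \sum_(j < d) c j -> (f n).1 < d /\ (f n).2 < c (f n).1) /\
  (forall n n', n < \sum_(j < d) c j -> n' < \sum_(j < d) c j -> f n = f n' -> n = n') /\
  (forall j m, j < d -> m < c j -> exists2 n, n < \sum_(j < d) c j & f n = (j, m)).
Proof.
elim: d => [|d [f [H1 [H2 H3]]]].
  by exists (fun _ => (0,0)); rewrite big_ord0.
rewrite big_ord_recr /=.
set N := \sum_(i < d) c i.
exists (fun n => if n < N then f n else (d, n - N)).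
split; [|split].
- move=> n Hn; case: ifP => Hl.
    by have [? ?] := H1 n Hl; split => //; apply: ltnW.
  by move/negbT: Hl => Hl /=; split; lia.
- move=> n n' Hn Hn'; case: ifP => Hl; case: ifP => Hl'.
  + exact: H2.
  + by have [Ha ?] := H1 n Hl => E; rewrite E /= in Ha; lia.
  + by have [Ha ?] := H1 n' Hl' => E; rewrite -E /= in Ha; lia.
  + by case=> E; move/negbT: Hl; move/negbT: Hl'; lia.
- move=> j m Hj Hm; case: (ltnP j d) => Hjd.
    have [n Hn E] := H3 j m Hjd Hm.
    by exists n; [lia | rewrite Hn].
  have Ej : j = d by lia.
  subst j; exists (N + m); first lia.
  by rewrite ltnNge leq_addr /= addKn.
Qed.

Lemma part_b (d : nat) (ks : 'I_d -> nat) (Omega : 'I_d -> Type)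
          (S : forall i, set (set (Omega i))) :
     (0 < d)%N -> (forall i, 0 < ks i)%N ->
     (forall i, inhabited (Omega i)) ->
     (forall i, ksemiring (ks i) (S i)) ->
     ksemiring (\sum_(i < d) ks i)%N
       [set X | exists Si : forall i, set (Omega i),
                  (forall i, S i (Si i)) /\
                  X = [set x : forall i, Omega i | forall i, Si i (x i)]].
Proof.
move=> d0 ks0 _ HS; split.
- exists (fun _ => set0); split => [i|]; first by case: (HS i).
  apply/seteqP; split => x //= H; exact: (H (Ordinal d0)).
- exists (fun _ => setT); split => [i|]; first by case: (HS i).
  by apply/seteqP; split => x.
- move=> X Y [Ai [HAi ->]] [Bi [HBi ->]].
  exists (fun i => Ai i `&` Bi i); split => [i|].
    by case: (HS i) => _ _ HI _; apply: HI.
  apply/seteqP; split => x /=.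
    by move=> [H1 H2] i; split.
  by move=> H; split => i; case: (H i).
- move=> X Y [Ai [HAi ->]] [Bi [HBi ->]].
  have HI i a b : S i a -> S i b -> S i (a `&` b) by case: (HS i) => _ _ HI _; apply: HI.
  have D : forall i, exists p : nat * (nat -> set (Omega i)),
     [/\ (1 <= p.1 <= ks i)%N, (forall m, m < p.1 -> S i (p.2 m)),
         (forall m m', m < p.1 -> m' < p.1 -> m <> m' -> p.2 m `&` p.2 m' = set0) &
         Ai i `\` Bi i = \bigcup_(m in [set m | m < p.1]) p.2 m].
    move=> i; case: (HS i) => _ _ _ H.
    have [l [Hl [R [H1 [H2 H3]]]]] := H _ _ (HAi i) (HBi i).
    by exists (l, R); split.
  pose lsel i := (projT1 (cid (D i))).1.
  pose Rsel i := (projT1 (cid (D i))).2.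
  have spec i : [/\ (1 <= lsel i <= ks i)%N, (forall m, m < lsel i -> S i (Rsel i m)),
         (forall m m', m < lsel i -> m' < lsel i -> m <> m' -> Rsel i m `&` Rsel i m' = set0) &
         Ai i `\` Bi i = \bigcup_(m in [set m | m < lsel i]) Rsel i m].
    exact: (projT2 (cid (D i))).
  have RselD i m : m < lsel i -> Rsel i m `<=` Ai i `\` Bi i.
    by case: (spec i) => _ _ _ -> Hm y Hy; exists m.
  pose c (j : nat) := oapp lsel 0 (insub j : option 'I_d).
  have cE (i : 'I_d) : c (val i) = lsel i by rewrite /c valK.
  have [f [F1 [F2 F3]]] := flatten d c.
  have EN : \sum_(i < d) lsel i = \sum_(j < d) c j.
    by apply: eq_bigr => i _; rewrite cE.
  pose comp (j m : nat) (i : 'I_d) : set (Omega i) :=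
    if (i < j)%N then Ai i `&` Bi i else if (i == j :> nat) then Rsel i m else Ai i.
  pose piece j m := [set x : forall i, Omega i | forall i, comp j m i (x i)].
  have compA j m i y : (val i = j -> m < c j) -> comp j m i y -> Ai i y.
    rewrite /comp; case: ifP => _; first by move=> _ [].  
    case: ifP => // /eqP Hij Hm Hy.
    subst j; have Hm2 : m < lsel i by rewrite -cE; exact: Hm.
    by have [] := RselD i m Hm2 _ Hy.
  exists (\sum_(j < d) c j); split.
    rewrite -EN; apply/andP; split.
      rewrite (bigD1 (Ordinal d0)) //=; apply: leq_trans (leq_addr _ _).
      by case: (spec (Ordinal d0)) => /andP [].
    by apply: leq_sum => i _; case: (spec i) => /andP [].
  exists (fun n => piece (f n).1 (f n).2); split; [|split].
  + move=> n Hn; have [Hj Hm] := F1 n Hn.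
    exists (comp (f n).1 (f n).2); split => // i; rewrite /comp.
    case: ifP => _; first by apply: HI.
    case: ifP => // /eqP Hij; first by case: (spec i) => _ H _ _; apply: H; rewrite -cE; move: Hm; rewrite -Hij.
  + have W : forall j m j' m', j < d -> m < c j -> j < j' ->
        piece j m `&` piece j' m' = set0.
      move=> j m j' m' Hj Hm Hjj'; apply/seteqP; split => x // [H1 H2].
      have := H1 (Ordinal Hj); have := H2 (Ordinal Hj).
      rewrite /comp /= Hjj' ltnn eqxx => -[_ Hb] Hr.
      have := RselD (Ordinal Hj) m; rewrite -cE /= => /(_ Hm) /(_ _ Hr) [].
      by [].
    move=> n n' Hn Hn' Hnn'.
    have Hf : f n <> f n' by move=> E; apply: Hnn'; apply: F2.
    have [Hj Hm] := F1 n Hn; have [Hj' Hm'] := F1 n' Hn'.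
    move: Hf Hj Hm Hj' Hm'; case: (f n) => j m; case: (f n') => j' m' /= Hf Hj Hm Hj' Hm'.
    case: (ltngtP j j') => h; first exact: W.
      by rewrite setIC; apply: W.
    subst j'; have Hmm : m <> m' by move=> E; apply: Hf; rewrite E.
    apply/seteqP; split => x // [H1 H2].
    have := H1 (Ordinal Hj); have := H2 (Ordinal Hj).
    rewrite /comp /= ltnn eqxx => Hr' Hr.
    case: (spec (Ordinal Hj)) => _ _ HD _.
    have := HD m m'; rewrite -cE /= => /(_ Hm Hm' Hmm) E.
    have : (Rsel (Ordinal Hj) m `&` Rsel (Ordinal Hj) m') (x (Ordinal Hj)) by [].
    by rewrite E.
  + apply/seteqP; split => x.
    * case=> /= HAx HBx.
      have : exists j, `[< exists i : 'I_d, val i = j /\ ~ Bi i (x i) >].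
        have [//|Hn] := pselect (exists j, `[< exists i : 'I_d, val i = j /\ ~ Bi i (x i) >]).
        exfalso; apply: HBx => i.
        apply: contrapT => Hb; apply: Hn; exists (val i); apply/asboolP; by exists i.
      case/ex_minnP => j /asboolP [i0 [Hi0 HB0]] Hmin.
      have : (Ai i0 `\` Bi i0) (x i0) by split.
      case: (spec i0) => _ _ _ -> [m /= Hm Hr].
      have Hj : j < d by rewrite -Hi0; exact: ltn_ord.
      have Hmc : m < c j by rewrite -Hi0; rewrite cE.
      have [n Hn Efn] := F3 j m Hj Hmc.
      exists n => //=; rewrite Efn /= => o; rewrite /comp; case: ifP => Ho.
        split => //; apply: contrapT => Hb.
        have := Hmin (val o) (asboolT (ex_intro _ o (conj erefl Hb))).
        by rewrite leqNgt Ho.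
      case: ifP => Ho' //.
      by have -> : o = i0 by apply: val_inj; rewrite Hi0; apply/eqP.
    * case=> n /= Hn H; have [Hj Hm] := F1 n Hn.
      move: H Hj Hm; case: (f n) => j m /= H Hj Hm; split.
        by move=> i; apply: (compA j m) (H i) => _.
      move=> HB; have := H (Ordinal Hj); rewrite /comp /= ltnn eqxx => Hr.
      have := RselD (Ordinal Hj) m; rewrite -cE /= => /(_ Hm) /(_ _ Hr) [] _.
      by apply.
Qed.
Lemma bigcapTE (I T : Type) (F : I -> set T) x :
  (\bigcap_(i in setT) F i) x <-> forall i, F i x.
Proof. by split => H i; [apply: H | move=> _; apply: H]. Qed.

Lemma alg0 T (X : set (set T)) : algebra_of_sets X -> X set0.
Proof. by case=> HT HC _; rewrite -setCT; apply: HC. Qed.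

Lemma algI T (X : set (set T)) a b : algebra_of_sets X -> X a -> X b -> X (a `&` b).
Proof.
case=> HT HC HU Ha Hb; rewrite -[a `&` b]setCK setCI.
by apply HC; apply HU; apply HC.
Qed.

Lemma part_a (T : Type) (k : nat) (A : 'I_k -> set (set T)) :
     inhabited T -> (0 < k)%N ->
     (forall i, algebra_of_sets (A i)) ->
     ksemiring k
       [set X | exists Ai : 'I_k -> set T,
                  (forall i, A i (Ai i)) /\ X = \bigcap_(i in setT) Ai i].
Proof.
move=> _ k0 HA; split.
- exists (fun _ => set0); split => [i|]; first exact: alg0.
  apply/seteqP; split => x //; move/bigcapTE => H; exact: (H (Ordinal k0)).
- exists (fun _ => setT); split => [i|]; first by case: (HA i).
  by apply/seteqP; split => x // _; apply/bigcapTE.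
- move=> X Y [Ai [HAi ->]] [Bi [HBi ->]].
  exists (fun i => Ai i `&` Bi i); split => [i|]; first exact: algI.
  apply/seteqP; split => x.
    by case=> /bigcapTE H1 /bigcapTE H2; apply/bigcapTE => i; split.
  by move/bigcapTE => H; split; apply/bigcapTE => i; case: (H i).
- move=> X Y [Ai [HAi ->]] [Bi [HBi ->]].
  exists k; split; first by lia.
  pose comp (j : nat) (i : 'I_k) := if (i < j)%N then Ai i `&` Bi i
     else if (i == j :> nat) then Ai i `&` ~` Bi i else Ai i.
  have compA j i x : comp j i x -> Ai i x.
    by rewrite /comp; case: ifP => _; [case|case: ifP => _ //; case].
  exists (fun j => \bigcap_(i in setT) comp j i); split; [|split].
  + move=> j _; exists (comp j); split => // i; rewrite /comp.
    case: ifP => _; first exact: algI.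
    case: ifP => _ //; apply: algI => //; case: (HA i) => _ HC _; exact: HC.
  + suff W : forall i j, (i < k)%N -> (j < k)%N -> (i < j)%N ->
       \bigcap_(i0 in setT) comp i i0 `&` \bigcap_(i0 in setT) comp j i0 = set0.
      move=> i j Hi Hj Hij; case: (ltngtP i j) => h; first exact: W.
        by rewrite setIC; apply: W.
      by [].
    move=> i j Hi Hj Hij; apply/seteqP; split => x //.
    case=> /bigcapTE H1 /bigcapTE H2.
    have := H1 (Ordinal Hi); have := H2 (Ordinal Hi); rewrite /comp /= Hij ltnn eqxx.
    by case=> _ ? [].
  + apply/seteqP; split => x.
    * case=> /bigcapTE HAx HBx.
      have : exists j, `[< exists i : 'I_k, val i = j /\ ~ Bi i x >].
        have [//|Hn] := pselect (exists j, `[< exists i : 'I_k, val i = j /\ ~ Bi i x >]).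
        exfalso; apply: HBx; apply/bigcapTE => i.
        apply: contrapT => Hb; apply: Hn; exists (val i); apply/asboolP; by exists i.
      case/ex_minnP => j /asboolP [i0 [Hi0 HB0]] Hmin.
      exists j => /=; first by rewrite -Hi0; exact: ltn_ord.
      apply/bigcapTE => o; rewrite /comp; case: ifP => Ho.
        split => //; apply: contrapT => Hb.
        have := Hmin (val o) (asboolT (ex_intro _ o (conj erefl Hb))); by rewrite leqNgt Ho.
      case: ifP => Ho' //; split => //.
      by have -> : o = i0 by apply: val_inj; rewrite Hi0; apply/eqP.
    * case=> j /= Hj /bigcapTE H; split.
        by apply/bigcapTE => i; apply: (compA j); apply: H.
      move/bigcapTE => HB; have := H (Ordinal Hj); rewrite /comp /= ltnn eqxx.
      by case=> _; apply.
Qed.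

Theorem corollary2p4 :
  (* (a) *)
  (forall (T : Type) (k : nat) (A : 'I_k -> set (set T)),
     inhabited T -> (0 < k)%N ->
     (forall i, algebra_of_sets (A i)) ->
     ksemiring k
       [set X | exists Ai : 'I_k -> set T,
                  (forall i, A i (Ai i)) /\ X = \bigcap_(i in setT) Ai i])
  /\
  (* (b) *)
  (forall (d : nat) (ks : 'I_d -> nat) (Omega : 'I_d -> Type)
          (S : forall i, set (set (Omega i))),
     (0 < d)%N -> (forall i, 0 < ks i)%N ->
     (forall i, inhabited (Omega i)) ->
     (forall i, ksemiring (ks i) (S i)) ->
     ksemiring (\sum_(i < d) ks i)%N
       [set X | exists Si : forall i, set (Omega i),
                  (forall i, S i (Si i)) /\
                  X = [set x : forall i, Omega i | forall i, Si i (x i)]]).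
Proof. split; [exact: part_a | exact: part_b]. Qed.
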